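(* Let $S$ be a semigroup. Then $S^0$ is finitely right equated if and only if $S$ is finitely right equated and $S=US^1$ for some finite set $U\subseteq S$.
   Context: $S^0$ is $S$ if $S$ has a zero and otherwise $S$ with a zero adjoined; $S^1$ is $S$ if $S$ is a monoid and otherwise $S$ with an identity adjoined. For $a\in S$, $\mathbf{r}_S(a)=\{(s,t)\in S\times S\mid as=at\}$; $S$ is finitely right equated if each $\mathbf{r}_S(a)$ is finitely generated as a right congruence. *)

(* Defs.v *)
From Stdlib Require Import List.
Import ListNotations.

Section Defs.
Variable T : Type.
Variable mul : T -> T -> T.

Definition right_congruence (rho : T -> T -> Prop) : Prop :=
  (forall x, rho x x) /\
  (forall x y, rho x y -> rho y x) /\
  (forall x y z, rho x y -> rho y z -> rho x z) /\
  (forall x y c, rho x y -> rho (mul x c) (mul y c)).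

Definition gen_right_congruence (H : list (T * T)) (x y : T) : Prop :=
  forall rho, right_congruence rho ->
    (forall p, In p H -> rho (fst p) (snd p)) -> rho x y.

Definition fg_right_congruence (rho : T -> T -> Prop) : Prop :=
  exists H : list (T * T), forall x y, rho x y <-> gen_right_congruence H x y.

Definition r_ann (a : T) (s t : T) : Prop := mul a s = mul a t.

Definition fin_right_equated : Prop :=
  forall a : T, fg_right_congruence (r_ann a).

Definition is_zero (z : T) : Prop :=
  forall x, mul z x = z /\ mul x z = z.

Definition has_zero : Prop := exists z, is_zero z.
End Defs.

(* S with a zero adjoined: carrier option T, None is the new zero. *)
Definition mul_adj0 {T : Type} (mul : T -> T -> T) (x y : option T) : option T :=
  match x, y with
  | Some a, Some b => Some (mul a b)
  | _, _ => None
  end.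

(* "S^0 is finitely right equated", unfolding S^0 by cases:
   S^0 = S if S has a zero, otherwise S with a zero adjoined. *)
Definition S0_fin_right_equated {T : Type} (mul : T -> T -> T) : Prop :=
  (has_zero T mul -> fin_right_equated T mul) /\
  (~ has_zero T mul -> fin_right_equated (option T) (mul_adj0 mul)).

(* x \in U S^1 = {u s | u \in U, s \in S^1}; since S^1 is S plus (possibly
   adjoined) identity, U S^1 = U \cup U S. *)
Definition in_US1 {T : Type} (mul : T -> T -> T) (U : list T) (x : T) : Prop :=
  exists u, In u U /\ (x = u \/ exists s, x = mul u s).

(* Main.v *)
Require Import Defs.
From Stdlib Require Import List Classical.
Import ListNotations.

Section Gen.
Variable T : Type.
Variable mul : T -> T -> T.
Hypothesis assoc : forall x y z, mul x (mul y z) = mul (mul x y) z.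

Lemma gen_rc (H : list (T*T)) : right_congruence T mul (gen_right_congruence T mul H).
Proof.
  unfold gen_right_congruence; split; [|split; [|split]].
  - intros x rho Hr _. apply (proj1 Hr).
  - intros x y Hxy rho Hr Hb. apply (proj1 (proj2 Hr)). apply Hxy; auto.
  - intros x y z H1 H2 rho Hr Hb. pose proof Hr as (_&_&Ht&_). apply (Ht x y z); [apply H1|apply H2]; auto.
  - intros x y c H1 rho Hr Hb. apply (proj2 (proj2 (proj2 Hr))). apply H1; auto.
Qed.

Lemma gen_base (H : list (T*T)) p : In p H -> gen_right_congruence T mul H (fst p) (snd p).
Proof. intros Hp rho _ Hb. auto. Qed.

Lemma r_ann_rc a : right_congruence T mul (r_ann T mul a).
Proof.
  unfold r_ann; split; [|split; [|split]]; intros.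
  - reflexivity.
  - congruence.
  - congruence.
  - rewrite !assoc, H. reflexivity.
Qed.

Definition USet (H : list (T*T)) := map fst H ++ map snd H.

Lemma US1_from (H : list (T*T)) z (Hg : forall x, gen_right_congruence T mul H x z) :
  forall x, x = z \/ in_US1 mul (USet H) x.
Proof.
  intro x.
  set (rho := fun a b => a = b \/ (in_US1 mul (USet H) a /\ in_US1 mul (USet H) b)).
  assert (Hr : right_congruence T mul rho).
  { unfold rho; split; [|split; [|split]].
    - auto.
    - intros a b [E|[A B]]; auto.
    - intros a b c [E|[A B]] [E'|[A' B']]; subst; auto.
    - intros a b c [E|[A B]]; [subst; auto|]. right.
      destruct A as (u&Hu&[E|(s&E)]); destruct B as (v&Hv&[E'|(t&E')]); subst;
      (split; [exists u|exists v]); (split; [assumption|right]);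
      first [exists c; reflexivity | exists (mul s c); rewrite assoc; reflexivity
            | exists (mul t c); rewrite assoc; reflexivity]. }
  assert (Hb : forall p, In p H -> rho (fst p) (snd p)).
  { intros [a b] Hp. right. unfold USet. simpl. split; [exists a|exists b]; (split; [|left; reflexivity]);
    apply in_or_app; [left; apply (in_map fst _ _ Hp)|right; apply (in_map snd _ _ Hp)]. }
  destruct (Hg x rho Hr Hb) as [E|[A B]]; auto.
Qed.
End Gen.

Lemma adj0_assoc {T} (mul : T -> T -> T) (assoc : forall x y z, mul x (mul y z) = mul (mul x y) z) :
  forall x y z, mul_adj0 mul x (mul_adj0 mul y z) = mul_adj0 mul (mul_adj0 mul x y) z.
Proof. intros [x|] [y|] [z|]; simpl; try reflexivity. rewrite assoc; reflexivity. Qed.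

Definition somes {T} (l : list (option T)) : list T :=
  flat_map (fun o => match o with Some a => [a] | None => [] end) l.

Lemma in_somes {T} (l : list (option T)) a : In (Some a) l -> In a (somes l).
Proof. intro h. unfold somes. apply in_flat_map. exists (Some a). simpl; auto. Qed.

Definition somepairs {T} (l : list (option T * option T)) : list (T*T) :=
  flat_map (fun p => match p with (Some s, Some t) => [(s,t)] | _ => [] end) l.

Lemma in_somepairs {T} (l : list (option T * option T)) s t :
  In (s,t) (somepairs l) -> In (Some s, Some t) l.
Proof.
  unfold somepairs. intro h. apply in_flat_map in h as ([[a|] [b|]]&h1&h2); simpl in h2;
  try tauto. destruct h2 as [E|[]]. inversion E; subst; auto.
Qed.

Lemma partA {T} (mul : T -> T -> T) (assoc : forall x y z, mul x (mul y z) = mul (mul x y) z) :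
  fin_right_equated (option T) (mul_adj0 mul) -> fin_right_equated T mul.
Proof.
  intros F a. destruct (F (Some a)) as [H0 HH0].
  exists (somepairs H0). intros x y; split.
  - intro R.
    assert (G : gen_right_congruence _ (mul_adj0 mul) H0 (Some x) (Some y)).
    { apply HH0. unfold r_ann; simpl. now rewrite R. }
    set (rho := fun a b : option T => match a, b with
       | None, None => True
       | Some x, Some y => gen_right_congruence T mul (somepairs H0) x y
       | _, _ => False end).
    pose proof (gen_rc T mul (somepairs H0)) as (R1&R2&R3&R4).
    apply (G rho).
    + split; [|split; [|split]].
      * intros [u|]; simpl; auto.
      * intros [u|] [v|]; simpl; auto.
      * intros [u|] [v|] [w|]; simpl; eauto; tauto.
      * intros [u|] [v|] [w|]; simpl; auto.
    + intros [[u|] [v|]] Hp; simpl; auto.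
      * apply (gen_base T mul _ (u,v)). unfold somepairs. apply in_flat_map. exists (Some u, Some v); simpl; auto.
      * assert (E := proj2 (HH0 _ _) (gen_base _ _ _ _ Hp)). unfold r_ann in E; simpl in E. discriminate.
      * assert (E := proj2 (HH0 _ _) (gen_base _ _ _ _ Hp)). unfold r_ann in E; simpl in E. discriminate.
  - intro G. apply G. apply r_ann_rc; auto.
    intros [s t] Hp. apply in_somepairs in Hp.
    assert (E := proj2 (HH0 _ _) (gen_base _ _ _ _ Hp)). unfold r_ann in E; simpl in E.
    inversion E as [E']. exact E'.
Qed.

Lemma partB {T} (mul : T -> T -> T) (assoc : forall x y z, mul x (mul y z) = mul (mul x y) z) U :
  fin_right_equated T mul -> (forall x, in_US1 mul U x) -> fin_right_equated (option T) (mul_adj0 mul).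
Proof.
  intros F HU [a|].
  - destruct (F a) as [H HH].
    exists (map (fun p => (Some (fst p), Some (snd p))) H).
    set (rho' := fun u v : option T => match u, v with Some u, Some v => r_ann T mul a u v
                   | None, None => True | _, _ => False end).
    assert (Hr' : right_congruence _ (mul_adj0 mul) rho').
    { destruct (r_ann_rc T mul assoc a) as (R1&R2&R3&R4). split; [|split;[|split]].
      * intros [u|]; simpl; auto.
      * intros [u|] [v|]; simpl; auto.
      * intros [u|] [v|] [w|]; simpl; eauto; tauto.
      * intros [u|] [v|] [w|]; simpl; auto. }
    assert (Hb' : forall p, In p (map (fun p => (Some (fst p), Some (snd p))) H) -> rho' (fst p) (snd p)).
    { intros p Hp. apply in_map_iff in Hp as (q&E&Hq). subst; simpl. apply (HH _ _). apply gen_base; auto. }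
    intros [x|] [y|]; split; unfold r_ann; simpl; intro h; try discriminate.
    + inversion h as [h']. assert (G := proj1 (HH x y) h').
      intros rho Hr Hb.
      set (rho2 := fun u v => rho (Some u) (Some v)).
      apply (G rho2).
      * destruct Hr as (R1&R2&R3&R4). unfold rho2; split; [|split;[|split]]; eauto.
        intros u v c h1. apply (R4 _ _ (Some c)) in h1. exact h1.
      * intros p Hp. apply (Hb _ (in_map _ _ _ Hp)).
    + f_equal. exact (h rho' Hr' Hb').
    + destruct (h rho' Hr' Hb').
    + destruct (h rho' Hr' Hb').
    + apply (proj1 (gen_rc _ _ _)).
    + reflexivity.
  - exists (map (fun u => (Some u, None)) U).
    assert (K : forall x, gen_right_congruence _ (mul_adj0 mul) (map (fun u => (Some u, None)) U) x None).
    { intros [x|]; [|apply (proj1 (gen_rc _ _ _))].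
      destruct (HU x) as (u&Hu&[E|(s&E)]); subst.
      - apply (gen_base _ _ _ (Some u, None)). apply (in_map (fun u => (Some u, None))); auto.
      - pose proof (gen_rc _ (mul_adj0 mul) (map (fun u => (Some u, None)) U)) as (R1&R2&R3&R4).
        apply (R4 (Some u) None (Some s)).
        apply (gen_base _ _ _ (Some u, None)). apply (in_map (fun u => (Some u, None))); auto. }
    intros x y; split; intro h.
    + pose proof (gen_rc _ (mul_adj0 mul) (map (fun u => (Some u, None)) U)) as (R1&R2&R3&R4).
      eapply R3; [apply K| apply R2, K].
    + reflexivity.
Qed.

Theorem mainTheorem10 (T : Type) (mul : T -> T -> T)
  (assoc : forall x y z, mul x (mul y z) = mul (mul x y) z) :
  S0_fin_right_equated mul <->
  (fin_right_equated T mul /\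
   exists U : list T, forall x : T, in_US1 mul U x).
Proof.
  split.
  - intros [Z N]. destruct (classic (has_zero T mul)) as [[z Hz]|nZ].
    + pose proof (Z (ex_intro _ z Hz)) as F. split; auto.
      destruct (F z) as [H HH].
      assert (Hg : forall x, gen_right_congruence T mul H x z).
      { intro x. apply HH. unfold r_ann. destruct (Hz x), (Hz z). congruence. }
      exists (z :: USet T H). intro x.
      destruct (US1_from T mul assoc H z Hg x) as [E|(u&Hu&P)].
      * exists z. simpl; auto.
      * exists u. simpl; auto.
    + pose proof (N nZ) as F. split; [apply (partA mul assoc F)|].
      destruct (F None) as [H HH].
      assert (Hg : forall x, gen_right_congruence _ (mul_adj0 mul) H x None).
      { intro x. apply HH. reflexivity. }
      exists (somes (USet _ H)). intro x.
      destruct (US1_from _ _ (adj0_assoc mul assoc) H None Hg (Some x)) as [E|(u&Hu&P)]; [discriminate|].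
      destruct P as [E|(s&E)].
      * subst. exists x. split; auto. apply in_somes; auto.
      * destruct u as [u|]; [|discriminate]. destruct s as [s|]; [|discriminate].
        inversion E. exists u. split; [apply in_somes; auto|right; eauto].
  - intros [F [U HU]]. split; intros _; auto. eapply partB; eauto.
Qed.
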